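(* Let $A \in \mathbb{R}^{n \times m}$, let $x \in \mathbb{R}^m$ have support $\mathcal{N}$, let $y := Ax$, and let $\mathcal{T} \subseteq \{1,\dots,m\}$ with $|\mathcal{T}| = k$, and set $\Delta_u := \mathcal{N} \setminus \mathcal{T}$, $u := |\Delta_u|$. Suppose the partial RIC $\delta_{2u}^{k}$ of $A$ exists (in particular $A_{\mathcal{T}'}$ has full column rank for every $\mathcal{T}'$ with $|\mathcal{T}'| = k$) and satisfies $\delta_{2u}^{k} < \sqrt{2} - 1$. Then $x$ is the unique solution of the modified-CS program $\min_b \|b_{\mathcal{T}^c}\|_1$ subject to $y = Ab$.
   Context: For a vector $v$ and index set $S$, $v_S$ denotes the subvector indexed by $S$; for a matrix $A$, $A_S$ denotes the submatrix of columns indexed by $S$; $\mathcal{T}^c$ is the complement of $\mathcal{T}$ in $\{1,\dots,m\}$. For a set $\mathcal{T}$ with $A_{\mathcal{T}}$ of full column rank, $\mathcal{P}_{\mathcal{T},\perp} := I - A_{\mathcal{T}}(A_{\mathcal{T}}'A_{\mathcal{T}})^{-1}A_{\mathcal{T}}'$. The partial RIC $\delta_u^{k}$ of $A$ is defined when $A_{\mathcal{T}}$ has full column rank for every set $\mathcal{T}$ of size $k$, as the smallest real number $\delta$ such that $(1-\delta)\|b\|_2^2 \le \|\mathcal{P}_{\mathcal{T},\perp} A_{\mathcal{T}^c} b\|_2^2 \le (1+\delta)\|b\|_2^2$ for all sets $\mathcal{T}$ of size $k$ and all vectors $b \in \mathbb{R}^{m-k}$ with at most $u$ nonzero entries. 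*)

(* Defs.v *)
From HB Require Import structures.
From mathcomp Require Import all_boot all_order all_algebra.
Set Implicit Arguments. Unset Strict Implicit. Unset Printing Implicit Defensive.
Import Order.TTheory GRing.Theory Num.Theory.
Local Open Scope ring_scope.

Section Defs.
Variable R : rcfType.

(* A_S : the submatrix of the columns of A indexed by S (in increasing order). *)
Definition colsubset n m (A : 'M[R]_(n, m)) (S : {set 'I_m}) : 'M[R]_(n, #|S|) :=
  colsub (fun j : 'I_#|S| => @enum_val _ (mem S) j) A.

Definition proj_perp n p (AT : 'M[R]_(n, p)) : 'M[R]_n :=
  1%:M - AT *m invmx (AT^T *m AT) *m AT^T.

Definition sqnorm p (v : 'cV[R]_p) : R := \sum_i (v i 0) ^+ 2.

Definition nnz p (v : 'cV[R]_p) : nat := #|[set i | v i 0 != 0]|.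

Definition supp p (v : 'cV[R]_p) : {set 'I_p} := [set i | v i 0 != 0].

Definition l1norm_on p (S : {set 'I_p}) (v : 'cV[R]_p) : R := \sum_(i in S) `|v i 0|.

Definition partial_RIC_bound n m (A : 'M[R]_(n, m)) (k u : nat) (delta : R) : Prop :=
  forall T : {set 'I_m}, #|T| = k ->
  forall b : 'cV[R]_#|~: T|, (nnz b <= u)%N ->
    (1 - delta) * sqnorm b <= sqnorm (proj_perp (colsubset A T) *m (colsubset A (~: T) *m b))
    /\ sqnorm (proj_perp (colsubset A T) *m (colsubset A (~: T) *m b)) <= (1 + delta) * sqnorm b.

Definition is_partial_RIC n m (A : 'M[R]_(n, m)) (k u : nat) (delta : R) : Prop :=
  (forall T : {set 'I_m}, #|T| = k -> \rank (colsubset A T) = k)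
  /\ partial_RIC_bound A k u delta
  /\ (forall delta', partial_RIC_bound A k u delta' -> delta <= delta').

Definition modCS_minimizer n m (A : 'M[R]_(n, m)) (y : 'cV[R]_n) (T : {set 'I_m})
  (b : 'cV[R]_m) : Prop :=
  A *m b = y /\ forall b' : 'cV[R]_m, A *m b' = y -> l1norm_on (~: T) b <= l1norm_on (~: T) b'.

End Defs.

(* Main.v *)
Require Import Defs.
From HB Require Import structures.
From mathcomp Require Import all_boot all_order all_algebra.
From mathcomp Require Import ring lra.
Set Implicit Arguments. Unset Strict Implicit. Unset Printing Implicit Defensive.
Import Order.TTheory GRing.Theory Num.Theory.
Local Open Scope ring_scope.

Section Gen.
Variable R : rcfType.

Definition vdot p (v w : 'cV[R]_p) : R := \sum_i v i 0 * w i 0.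
Definition restr p (U : {set 'I_p}) (g : 'cV[R]_p) : 'cV[R]_p :=
  \col_i (if i \in U then g i 0 else 0).
Definition suppd p (U : {set 'I_p}) (v : 'cV[R]_p) := forall i, i \notin U -> v i 0 = 0.
Definition nrm p (v : 'cV[R]_p) := Num.sqrt (sqnorm v).
Definition Ls p (g : 'cV[R]_p) (U : {set 'I_p}) := \sum_(i in U) `|g i 0|.

Lemma sqnormE p (v : 'cV[R]_p) : sqnorm v = vdot v v.
Proof. by apply: eq_bigr => i _; rewrite expr2. Qed.

Lemma vdotC p (v w : 'cV[R]_p) : vdot v w = vdot w v.
Proof. by apply: eq_bigr => i _; rewrite mulrC. Qed.

Lemma vdotDr p (v w1 w2 : 'cV[R]_p) : vdot v (w1 + w2) = vdot v w1 + vdot v w2.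
Proof. rewrite /vdot -big_split /=; apply: eq_bigr => i _; rewrite !mxE /=; ring. Qed.

Lemma vdotDl p (v1 v2 w : 'cV[R]_p) : vdot (v1 + v2) w = vdot v1 w + vdot v2 w.
Proof. by rewrite vdotC vdotDr !(vdotC w). Qed.

Lemma vdotNr p (v w : 'cV[R]_p) : vdot v (- w) = - vdot v w.
Proof. rewrite /vdot -sumrN; apply: eq_bigr => i _; rewrite !mxE; ring. Qed.

Lemma vdotZ p a b (v w : 'cV[R]_p) : vdot (a *: v) (b *: w) = a * b * vdot v w.
Proof. rewrite /vdot mulr_sumr; apply: eq_bigr => i _; rewrite !mxE; ring. Qed.

Lemma vdot_polar p (x y : 'cV[R]_p) :
  vdot (x + y) (x + y) - vdot (x - y) (x - y) = 4 * vdot x y.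
Proof. rewrite /vdot mulr_sumr -sumrB; apply: eq_bigr => i _; rewrite !mxE; ring. Qed.

Lemma sqnorm_ge0 p (v : 'cV[R]_p) : 0 <= sqnorm v.
Proof. by apply: sumr_ge0 => i _; rewrite sqr_ge0. Qed.

Lemma sqnorm_eq0 p (v : 'cV[R]_p) : sqnorm v = 0 -> v = 0.
Proof.
move=> h; apply/matrixP => i j; rewrite (ord1 j) mxE.
have := @psumr_eq0P _ _ xpredT (fun i => v i 0 ^+ 2) (fun i _ => sqr_ge0 (v i 0)) h i isT.
by move/eqP; rewrite sqrf_eq0 => /eqP.
Qed.

Lemma nrm_ge0 p (v : 'cV[R]_p) : 0 <= nrm v.
Proof. exact: sqrtr_ge0. Qed.

Lemma nrm_sq p (v : 'cV[R]_p) : nrm v ^+ 2 = sqnorm v.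
Proof. by rewrite sqr_sqrtr // sqnorm_ge0. Qed.

Lemma sqnormZ p a (v : 'cV[R]_p) : sqnorm (a *: v) = a ^+ 2 * sqnorm v.
Proof. by rewrite !sqnormE vdotZ expr2. Qed.

Lemma nnz_suppd p (U : {set 'I_p}) (v : 'cV[R]_p) : suppd U v -> (nnz v <= #|U|)%N.
Proof.
move=> h; apply: subset_leq_card; apply/subsetP => i; rewrite inE.
by apply: contraR => /h ->; rewrite eqxx.
Qed.

Lemma vdot_disj p (U V : {set 'I_p}) (v w : 'cV[R]_p) : [disjoint U & V] -> suppd U v -> suppd V w ->
  vdot v w = 0.
Proof.
move=> dUV hv hw; apply: big1 => i _.
case: (boolP (i \in U)) => iU; last by rewrite hv // mul0r.
have iV : i \notin V by move: dUV; rewrite disjoint_sym => /disjointFl ->.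
by rewrite hw // mulr0.
Qed.

Lemma sqnormD_disj p (U V : {set 'I_p}) (v w : 'cV[R]_p) : [disjoint U & V] -> suppd U v -> suppd V w ->
  sqnorm (v + w) = sqnorm v + sqnorm w.
Proof.
move=> dUV hv hw; rewrite !sqnormE vdotDl !vdotDr (vdotC w v) (vdot_disj dUV hv hw).
by rewrite addr0 add0r.
Qed.

Lemma suppdD p (U : {set 'I_p}) (v w : 'cV[R]_p) : suppd U v -> suppd U w -> suppd U (v + w).
Proof. by move=> hv hw i iU; rewrite mxE hv // hw // addr0. Qed.
Lemma suppdN p (U : {set 'I_p}) (v : 'cV[R]_p) : suppd U v -> suppd U (- v).
Proof. by move=> hv i iU; rewrite mxE hv // oppr0. Qed.
Lemma suppdZ p (U : {set 'I_p}) a (v : 'cV[R]_p) : suppd U v -> suppd U (a *: v).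
Proof. by move=> hv i iU; rewrite mxE hv // mulr0. Qed.
Lemma suppdS p (U V : {set 'I_p}) (v : 'cV[R]_p) : U \subset V -> suppd U v -> suppd V v.
Proof. by move=> sUV hv i iV; apply: hv; apply: contra iV; apply: (subsetP sUV). Qed.
Lemma suppd_restr p (U : {set 'I_p}) (g : 'cV[R]_p) : suppd U (restr U g).
Proof. by move=> i iU; rewrite mxE (negbTE iU). Qed.

Lemma sqnorm_restr p (U : {set 'I_p}) (g : 'cV[R]_p) : sqnorm (restr U g) = \sum_(i in U) g i 0 ^+ 2.
Proof.
rewrite /sqnorm [RHS]big_mkcond; apply: eq_bigr => i _; rewrite mxE.
by case: (i \in U) => //; rewrite expr0n.
Qed.

Lemma exists_sub_card T (W : {set T}) k : (k <= #|W|)%N ->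
  exists U : {set T}, U \subset W /\ #|U| = k.
Proof.
elim: k => [|k IH] hk; first by exists set0; rewrite sub0set cards0.
have [U [sUW cU]] := IH (ltnW hk).
have : (0 < #|W :\: U|)%N by rewrite cardsDS // cU subn_gt0.
case/card_gt0P => x; rewrite inE => /andP [xU xW].
exists (x |: U); split; first by rewrite subUset sub1set xW.
by rewrite cardsU1 xU cU.
Qed.

End Gen.
From HB Require Import structures.
From mathcomp Require Import all_boot all_order all_algebra.
From mathcomp Require Import ring lra zify.
Set Implicit Arguments. Unset Strict Implicit. Unset Printing Implicit Defensive.
Import Order.TTheory GRing.Theory Num.Theory.
Local Open Scope ring_scope.

Lemma final_arith (R : rcfType) (a b d s : R) : 0 <= a -> 0 <= b -> 0 <= d -> 0 <= s -> s ^+ 2 = 2 ->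
  d < s - 1 -> (1 - d) * (a ^+ 2 + b ^+ 2) <= d * (a + b) * a -> a = 0.
Proof.
move=> a0 b0 d0 s0 s2 ds h.
have s1 : 1 < s by nra.
have s32 : s < 3 / 2 by nra.
have X : a ^+ 2 + a * b <= (1 + s) / 2 * (a ^+ 2 + b ^+ 2).
  have sq := sqr_ge0 ((s - 1) * a - b).
  nra.
have Q0 : 0 <= a ^+ 2 + b ^+ 2 by nra.
have h3 : (1 - d) * (a ^+ 2 + b ^+ 2) <= d * ((1 + s) / 2) * (a ^+ 2 + b ^+ 2).
  apply: le_trans h _; nra.
have coef : 0 < (1 - d) - d * ((1 + s) / 2) by nra.
have : (a ^+ 2 + b ^+ 2) <= 0 by nra.
move=> h4; nra.
Qed.

Lemma cs_set (R : rcfType) (T : finType) (S : {set T}) (f : T -> R) :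
  (\sum_(i in S) f i) ^+ 2 <= #|S|%:R * \sum_(i in S) f i ^+ 2.
Proof.
set nS : R := #|S|%:R; set M := \sum_(i in S) f i; set F2 := \sum_(i in S) f i ^+ 2.
have e : \sum_(i in S) (nS * f i - M) ^+ 2 = nS ^+ 2 * F2 - nS * M ^+ 2.
  rewrite (eq_bigr (fun i => nS ^+ 2 * f i ^+ 2 + (- (2 * nS * M) * f i + M ^+ 2))); last first.
    by move=> i _; ring.
  rewrite big_split /= big_split /= -!mulr_sumr sumr_const -mulr_natl -/M -/F2 -/nS.
  ring.
have h : 0 <= nS ^+ 2 * F2 - nS * M ^+ 2 by rewrite -e; apply: sumr_ge0 => i _; apply: sqr_ge0.
have [z|p] := eqVneq #|S| 0%N.
  rewrite /M; move/eqP: z; rewrite cards_eq0 => /eqP ->; rewrite big_set0 expr0n /=.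
  by rewrite mulr_ge0 // sumr_ge0 // => i _; apply: sqr_ge0.
have n0 : 0 < nS by rewrite ltr0n lt0n.
nra.
Qed.
From HB Require Import structures.
From mathcomp Require Import all_boot all_order all_algebra.
From mathcomp Require Import ring lra zify.
Set Implicit Arguments. Unset Strict Implicit. Unset Printing Implicit Defensive.
Import Order.TTheory GRing.Theory Num.Theory.
Local Open Scope ring_scope.

Section CS.
Variables (R : rcfType) (n N u : nat) (B : 'M[R]_(n, N)) (d : R).
Hypothesis RIP : forall b : 'cV[R]_N, (nnz b <= 2 * u)%N ->
  (1 - d) * sqnorm b <= sqnorm (B *m b) /\ sqnorm (B *m b) <= (1 + d) * sqnorm b.

Definition ip (v w : 'cV[R]_N) := vdot (B *m v) (B *m w).

Lemma ipZ a b v w : ip (a *: v) (b *: w) = a * b * ip v w.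
Proof. by rewrite /ip -!scalemxAr vdotZ. Qed.

Lemma ip0l w : ip 0 w = 0.
Proof. by rewrite /ip mulmx0 /vdot big1 // => i _; rewrite mxE mul0r. Qed.
Lemma ip0r w : ip w 0 = 0.
Proof. by rewrite /ip mulmx0 /vdot big1 // => i _; rewrite [X in _ * X]mxE mulr0. Qed.
Lemma ipNr v w : ip v (- w) = - ip v w.
Proof. by rewrite /ip mulmxN vdotNr. Qed.
Lemma ipDr v w1 w2 : ip v (w1 + w2) = ip v w1 + ip v w2.
Proof. by rewrite /ip mulmxDr vdotDr. Qed.

Lemma polar (U V : {set 'I_N}) v w : (#|U| <= u)%N -> (#|V| <= u)%N -> [disjoint U & V] ->
  suppd U v -> suppd V w -> `|ip v w| <= d * nrm v * nrm w.
Proof.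
move=> cU cV dUV hv hw.
set a := nrm w; set b := nrm v.
have key : forall w', suppd V w' -> sqnorm w' = sqnorm w ->
    ip (a *: v) (b *: w') <= d * (a * b) ^+ 2.
  move=> w' hw' sw'.
  set x := a *: v; set y := b *: w'.
  have hx : suppd U x by apply: suppdZ.
  have hy : suppd V y by apply: suppdZ.
  have sx : sqnorm x = sqnorm v * sqnorm w by rewrite sqnormZ /a nrm_sq mulrC.
  have sy : sqnorm y = sqnorm v * sqnorm w by rewrite sqnormZ /b nrm_sq sw'.
  have cUV : (#|U :|: V| <= 2 * u)%N.
    by apply: leq_trans (leq_card_setU U V) _; rewrite mul2n -addnn leq_add.
  have hxy : suppd (U :|: V) (x + y).
    by apply: suppdD; [apply: suppdS hx; apply: subsetUl | apply: suppdS hy; apply: subsetUr].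
  have hxy' : suppd (U :|: V) (x - y).
    by apply: suppdD; [apply: suppdS hx; apply: subsetUl | apply: suppdS (suppdN hy); apply: subsetUr].
  have [_ up] := RIP (leq_trans (nnz_suppd hxy) cUV).
  have [lo _] := RIP (leq_trans (nnz_suppd hxy') cUV).
  rewrite (sqnormD_disj dUV hx hy) sx sy in up.
  have sny : sqnorm (- y) = sqnorm y by rewrite !sqnormE vdotNr vdotC vdotNr opprK.
  rewrite (sqnormD_disj dUV hx (suppdN hy)) sx sny sy in lo.
  have p4 := vdot_polar (B *m x) (B *m y).
  rewrite -mulmxDr -mulmxBr -!sqnormE in p4.
  have ab : (a * b) ^+ 2 = sqnorm v * sqnorm w.
    by rewrite exprMn /a /b !nrm_sq mulrC.
  rewrite ab /ip; move: up lo p4; set M := sqnorm v * sqnorm w.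
  set P := sqnorm _; set Q := sqnorm _; set Z := vdot _ _ => up lo p4.
  nra.
have k1 := key w hw erefl.
have snw : sqnorm (- w) = sqnorm w by rewrite !sqnormE vdotNr vdotC vdotNr opprK.
have k2 := key (- w) (suppdN hw) snw.
rewrite ipZ in k1; rewrite ipZ ipNr in k2.
have a0 : 0 <= a := nrm_ge0 w.
have b0 : 0 <= b := nrm_ge0 v.
have [az|ap] := eqVneq a 0.
  have : sqnorm w = 0 by rewrite -nrm_sq -/a az expr0n.
  by move/sqnorm_eq0 => ->; rewrite ip0r normr0 az mulr0.
have [bz|bp] := eqVneq b 0.
  have : sqnorm v = 0 by rewrite -nrm_sq -/b bz expr0n.
  by move/sqnorm_eq0 => ->; rewrite ip0l normr0 bz mulr0 mul0r.
have ab0 : 0 < a * b by rewrite mulr_gt0 // lt_def ?ap ?bp.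
rewrite ler_norml; apply/andP; split; nra.
Qed.

Lemma topblock (g : 'cV[R]_N) (W : {set 'I_N}) : (u <= #|W|)%N ->
  exists U : {set 'I_N}, [/\ U \subset W, #|U| = u &
    forall j, j \in W :\: U -> u%:R * `|g j 0| <= Ls g U].
Proof.
move=> hu; have [U0 [s0 c0]] := exists_sub_card hu.
pose P := fun U : {set 'I_N} => (U \subset W) && (#|U| == u).
have P0 : P U0 by rewrite /P s0 c0 eqxx.
case: (arg_maxP (fun U => Ls g U) P0) => U /andP [sUW /eqP cU] Umax.
exists U; split => // j; rewrite inE => /andP [jU jW].
have le : forall i, i \in U -> `|g j 0| <= `|g i 0|.
  move=> i iU.
  have PU' : P (j |: (U :\ i)).
    rewrite /P subUset sub1set jW (subset_trans (subsetDl U [set i]) sUW) /=.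
    rewrite cardsU1 in_setD1 (negbTE jU) andbF /=.
    by rewrite -cU (cardsD1 i U) iU.
  have := Umax _ PU'; rewrite /Ls big_setU1 /=; last by rewrite in_setD1 (negbTE jU) andbF.
  rewrite (big_setD1 i iU) /=; lra.
rewrite /Ls -cU mulr_natl -sumr_const.
by apply: ler_sum => i iU; apply: le.
Qed.

Lemma sq_le_of_abs (x c : R) : `|x| <= c -> x ^+ 2 <= c ^+ 2.
Proof. by rewrite ler_norml => /andP [h1 h2]; nra. Qed.

Lemma nrm_restr_le (g : 'cV[R]_N) (W : {set 'I_N}) c : (#|W| <= u)%N -> 0 <= c ->
  (forall j, j \in W -> `|g j 0| <= c) -> nrm (restr W g) <= Num.sqrt u%:R * c.
Proof.
move=> cW c0 hc; rewrite /nrm sqnorm_restr.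
have h1 : \sum_(i in W) g i 0 ^+ 2 <= u%:R * c ^+ 2.
  apply: le_trans (_ : \sum_(i in W) c ^+ 2 <= _).
    by apply: ler_sum => i iW; apply: sq_le_of_abs; apply: hc.
  rewrite sumr_const -[c ^+ 2 *+ _]mulr_natl; apply: ler_wpM2r; [exact: sqr_ge0|].
  by rewrite ler_nat.
apply: le_trans (ler_wsqrtr h1) _.
by rewrite sqrtrM ?ler0n // sqrtr_sqr ger0_norm.
Qed.

Hypothesis d0 : 0 <= d.
Hypothesis u0 : (0 < u)%N.

Lemma block (g z : 'cV[R]_N) (Z : {set 'I_N}) : (#|Z| <= u)%N -> suppd Z z ->
  forall k (W : {set 'I_N}) c, (#|W| < k)%N -> [disjoint Z & W] -> 0 <= c ->
  (forall j, j \in W -> `|g j 0| <= c) ->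
  `|ip z (restr W g)| <= d * nrm z * (Num.sqrt u%:R * c + Ls g W / Num.sqrt u%:R).
Proof.
move=> cZ hz; set s := Num.sqrt u%:R.
have s0 : 0 < s by rewrite sqrtr_gt0 ltr0n.
have dz0 : 0 <= d * nrm z by rewrite mulr_ge0 // nrm_ge0.
have Ls0 : forall W, 0 <= Ls g W by move=> W; apply: sumr_ge0 => i _; apply: normr_ge0.
elim=> [//|k IH] W c cW dZW c0 hc.
case: (leqP #|W| u) => hWu.
  apply: le_trans (polar cZ hWu dZW hz (@suppd_restr _ _ W g)) _.
  apply: ler_wpM2l => //; apply: le_trans (nrm_restr_le hWu c0 hc) _.
  by rewrite lerDl divr_ge0 // ltW.
have [U [sUW cU hU]] := topblock g (ltnW hWu).
set c' := Ls g U / (s * s).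
have eW : restr W g = restr U g + restr (W :\: U) g.
  apply/matrixP => i j; rewrite !mxE in_setD.
  case: (boolP (i \in U)) => iU /=; last by rewrite add0r.
  by rewrite (subsetP sUW i iU) addr0.
have dZU : [disjoint Z & U] by apply: disjointWr dZW.
have dZW' : [disjoint Z & W :\: U] by apply: disjointWr dZW; apply: subsetDl.
have cW' : (#|W :\: U| < k)%N.
  rewrite cardsDS // cU; move: cW hWu u0; lia.
have ss : s * s = u%:R by rewrite -expr2 sqr_sqrtr // ler0n.
have c'0 : 0 <= c' by rewrite divr_ge0 // ?Ls0 // mulr_ge0 // ltW.
have hc' : forall j, j \in W :\: U -> `|g j 0| <= c'.
  move=> j jW; rewrite /c' ss mulrC ler_pdivlMl ?ltr0n //; exact: hU.
have IH' := IH _ _ cW' dZW' c'0 hc'.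
have hUb : `|ip z (restr U g)| <= d * nrm z * (s * c).
  apply: le_trans (polar cZ (eq_leq cU) dZU hz (@suppd_restr _ _ U g)) _.
  apply: ler_wpM2l => //; apply: nrm_restr_le; first by rewrite cU.
    by [].
  by move=> j jU; apply: hc; apply: (subsetP sUW).
have eL : Ls g W = Ls g U + Ls g (W :\: U).
  by rewrite /Ls (big_setID (A:=W) U) (setIidPr sUW).
have e' : s * c' = Ls g U / s by rewrite /c'; field; rewrite gt_eqF.
rewrite eW ipDr; apply: le_trans (ler_normD _ _) _.
rewrite e' in IH'; rewrite eL.
have -> : s * c + (Ls g U + Ls g (W :\: U)) / s = s * c + (Ls g U / s + Ls g (W :\: U) / s) by rewrite mulrDl.
rewrite mulrDr; apply: lerD => //.
Qed.

Lemma ipDl v1 v2 w : ip (v1 + v2) w = ip v1 w + ip v2 w.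
Proof. by rewrite /ip mulmxDr vdotDl. Qed.

Lemma core (xx g : 'cV[R]_N) : d < Num.sqrt 2 - 1 -> B *m g = 0 -> #|supp xx| = u ->
  \sum_i `|(xx + g) i 0| <= \sum_i `|xx i 0| -> g = 0.
Proof.
move=> dlt Bg cS hl.
set S := supp xx.
have Ls0 : forall W, 0 <= Ls g W by move=> W; apply: sumr_ge0 => i _; apply: normr_ge0.
have xS : forall i, i \notin S -> xx i 0 = 0.
  by move=> i; rewrite inE negbK => /eqP.
have L1 : Ls g (~: S) <= Ls g S.
  move: hl; rewrite (bigID (fun i => i \in S)) [X in _ <= X](bigID (fun i => i \in S)) /=.
  have e1 : \sum_(i | i \notin S) `|(xx + g) i 0| = Ls g (~: S).
    rewrite /Ls; apply: eq_big => i; first by rewrite in_setC.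
    by move=> iS; rewrite mxE xS // add0r.
  have e0 : \sum_(i | i \notin S) `|xx i 0| = 0.
    by apply: big1 => i iS; rewrite xS // normr0.
  have e2 : \sum_(i in S) `|(xx + g) i 0| >= \sum_(i in S) `|xx i 0| - Ls g S.
    rewrite /Ls -sumrB; apply: ler_sum => i _; rewrite mxE.
    have := lerB_normD (xx i 0) (g i 0); lra.
  rewrite e1 e0; lra.
have [T1 [sT1 cT1 hT1]] : exists T1 : {set 'I_N}, [/\ T1 \subset ~: S, (#|T1| <= u)%N &
    forall j, j \in ~: S :\: T1 -> u%:R * `|g j 0| <= Ls g T1].
  case: (leqP u #|~: S|) => h.
    by have [U [? cU ?]] := topblock g h; exists U; split => //; rewrite cU.
  exists (~: S); split => //; first exact: ltnW.
  by move=> j; rewrite setDv inE.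
set W := ~: S :\: T1.
pose s := Num.sqrt (u%:R : R).
have s0 : 0 < s by rewrite sqrtr_gt0 ltr0n.
have ss : s * s = u%:R by rewrite -expr2 sqr_sqrtr // ler0n.
set c := Ls g T1 / (s * s).
have c0 : 0 <= c by rewrite divr_ge0 // mulr_ge0 // ltW.
have hc : forall j, j \in W -> `|g j 0| <= c.
  move=> j jW; rewrite /c ss mulrC ler_pdivlMl ?ltr0n //; exact: hT1.
set v1 := restr S g; set v2 := restr T1 g; set w := restr W g; set z := v1 + v2.
have dST1 : [disjoint S & T1] by rewrite disjoint_sym disjoints_subset.
have dSW : [disjoint S & W].
  by rewrite disjoint_sym disjoints_subset; apply: subsetDl.
have dT1W : [disjoint T1 & W].
  rewrite disjoint_sym disjoints_subset; apply/subsetP => i; rewrite !inE.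
  by case/andP.
have eg : g = z + w.
  apply/matrixP => i j; rewrite (ord1 j) !mxE /W in_setD in_setC.
  case: (boolP (i \in S)) => iS /=.
    by rewrite (disjointFr dST1 iS) /= !addr0.
  case: (boolP (i \in T1)) => iT /=; first by rewrite add0r addr0.
  by rewrite !add0r.
have ipzg : ip z g = 0 by rewrite /ip Bg /vdot big1 // => i _; rewrite [X in _ * X]mxE mulr0.
have izz : ip z z = - (ip v1 w + ip v2 w).
  by move: ipzg; rewrite [X in ip z X]eg ipDr -ipDl => /eqP; rewrite addr_eq0 => /eqP.
have sz : (#|S :|: T1| <= 2 * u)%N.
  by apply: leq_trans (leq_card_setU S T1) _; rewrite mul2n -addnn leq_add // cS.
have hz : suppd (S :|: T1) z.
  by apply: suppdD; [apply: suppdS (@suppd_restr _ _ S g); apply: subsetUl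
                    | apply: suppdS (@suppd_restr _ _ T1 g); apply: subsetUr].
have [lo _] := RIP (leq_trans (nnz_suppd hz) sz).
have e3 : sqnorm (B *m z) = ip z z by rewrite sqnormE.
rewrite e3 izz in lo.
have cSu : (#|S| <= u)%N by rewrite cS.
have b1 := @block g v1 S cSu (@suppd_restr _ _ S g) _ W c (ltnSn #|W|) dSW c0 hc.
have b2 := @block g v2 T1 cT1 (@suppd_restr _ _ T1 g) _ W c (ltnSn #|W|) dT1W c0 hc.
rewrite -/s -/w in b1 b2.
set K := s * c + Ls g W / s in b1 b2.
set a := nrm v1 in b1; set b := nrm v2 in b2.
have a0 : 0 <= a := nrm_ge0 v1.
have b0 : 0 <= b := nrm_ge0 v2.
have eLc : Ls g (~: S) = Ls g T1 + Ls g W.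
  by rewrite /Ls (big_setID (A:=~: S) T1) (setIidPr sT1).
have eK : K * s = Ls g (~: S) by rewrite eLc /K /c; field; rewrite gt_eqF.
have CS : Ls g S <= s * a.
  have h := cs_set S (fun i => `|g i 0|).
  have e4 : \sum_(i in S) `|g i 0| ^+ 2 = a ^+ 2.
    by rewrite /a nrm_sq /v1 sqnorm_restr; apply: eq_bigr => i _; rewrite real_normK ?num_real.
  rewrite e4 cS -ss in h; rewrite /Ls in h *.
  have := Ls0 S; rewrite /Ls => h0.
  have sa0 : 0 <= s * a by rewrite mulr_ge0 // ltW.
  move: h0 sa0 h; set x := \sum_(i in S) _ => h0 sa0 h; nra.
have hK : K <= a.
  have h5 : K * s <= a * s by rewrite eK mulrC; apply: le_trans L1 CS.
  by rewrite ler_pM2r in h5.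
have K0 : 0 <= K.
  have h6 : 0 <= K * s by rewrite eK.
  by rewrite pmulr_lge0 in h6.
have sqz : sqnorm z = a ^+ 2 + b ^+ 2.
  by rewrite /z (sqnormD_disj dST1 (@suppd_restr _ _ S g) (@suppd_restr _ _ T1 g)) /a /b !nrm_sq.
rewrite sqz in lo.
have tri : - (ip v1 w + ip v2 w) <= `|ip v1 w| + `|ip v2 w|.
  have := ler_normD (ip v1 w) (ip v2 w); have := ler_norm (- (ip v1 w + ip v2 w)).
  rewrite normrN; lra.
have fin : (1 - d) * (a ^+ 2 + b ^+ 2) <= d * (a + b) * a.
  apply: le_trans lo _; apply: le_trans tri _.
  apply: le_trans (lerD b1 b2) _.
  have : d * a * K + d * b * K = d * (a + b) * K by ring.
  move=> ->; apply: ler_wpM2l => //; apply: mulr_ge0 => //; lra.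
have s2 : Num.sqrt 2 ^+ 2 = 2 :> R by rewrite sqr_sqrtr // ler0n.
have az := final_arith a0 b0 d0 (sqrtr_ge0 2) s2 dlt fin.
rewrite az mulr0 in CS.
have LS0 : Ls g S = 0 by apply/eqP; rewrite eq_le CS Ls0.
have LC0 : Ls g (~: S) = 0 by apply/eqP; rewrite eq_le Ls0 andbT -LS0.
apply/matrixP => i j; rewrite (ord1 j) mxE; apply/eqP; rewrite -normr_eq0; apply/eqP.
case: (boolP (i \in S)) => iS.
  by apply: (psumr_eq0P _ LS0) => // k _; apply: normr_ge0.
by apply: (psumr_eq0P _ LC0); [move=> k _; apply: normr_ge0 | rewrite in_setC].
Qed.

End CS.
From HB Require Import structures.
From mathcomp Require Import all_boot all_order all_algebra.
From mathcomp Require Import ring lra zify.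
Set Implicit Arguments. Unset Strict Implicit. Unset Printing Implicit Defensive.
Import Order.TTheory GRing.Theory Num.Theory.
Local Open Scope ring_scope.

Section Glue.
Variables (R : rcfType) (n m : nat) (A : 'M[R]_(n, m)).

Definition rT (S : {set 'I_m}) (h : 'cV[R]_m) : 'cV[R]_#|S| :=
  \col_(j < #|S|) h (@enum_val _ (mem S) j) 0.

Lemma rTD (S : {set 'I_m}) h1 h2 : rT S (h1 + h2) = rT S h1 + rT S h2.
Proof. by apply/matrixP => i j; rewrite !mxE. Qed.
Lemma rTB (S : {set 'I_m}) h1 h2 : rT S (h1 - h2) = rT S h1 - rT S h2.
Proof. by apply/matrixP => i j; rewrite !mxE. Qed.

Lemma sum_rT (S : {set 'I_m}) (F : R -> R) (h : 'cV[R]_m) :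
  \sum_(i in S) F (h i 0) = \sum_j F (rT S h j 0).
Proof. by rewrite big_enum_val; apply: eq_bigr => j _; rewrite mxE. Qed.

Lemma split_mul (S : {set 'I_m}) (h : 'cV[R]_m) :
  A *m h = colsubset A S *m rT S h + colsubset A (~: S) *m rT (~: S) h.
Proof.
apply/matrixP => i j; rewrite (ord1 j) !mxE (bigID (fun l => l \in S)) /=.
congr (_ + _).
  rewrite big_enum_val; apply: eq_bigr => k _; by rewrite !mxE.
rewrite (eq_bigl (fun l => l \in ~: S)); last by move=> l; rewrite in_setC.
rewrite big_enum_val; apply: eq_bigr => k _; by rewrite !mxE.
Qed.

Lemma sqnorm_mx p (v : 'cV[R]_p) : sqnorm v = (v^T *m v) 0 0.
Proof. by rewrite mxE; apply: eq_bigr => i _; rewrite mxE expr2. Qed.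

Lemma colrank_inj p (M : 'M[R]_(n, p)) : \rank M = p -> forall v : 'cV[R]_p, M *m v = 0 -> v = 0.
Proof.
move=> rk v Mv.
have rf : row_free M^T by rewrite /row_free mxrank_tr rk.
apply: trmx_inj; rewrite trmx0.
apply: (row_free_inj rf); rewrite mul0mx -trmx_mul Mv; exact: trmx0.
Qed.

Lemma gram_unit p (M : 'M[R]_(n, p)) : \rank M = p -> M^T *m M \in unitmx.
Proof.
move=> rk; rewrite -row_free_unit -kermx_eq0; apply/eqP.
apply/row_matrixP => i; rewrite row0.
set r := row i (kermx (M^T *m M)).
have r0 : r *m (M^T *m M) = 0 by rewrite /r -row_mul mulmx_ker row0.
have : sqnorm (M *m r^T) = 0.
  by rewrite sqnorm_mx trmx_mul trmxK !mulmxA -(mulmxA r) r0 mul0mx mxE.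
move/sqnorm_eq0/(colrank_inj rk) => h.
by rewrite -[r]trmxK h trmx0.
Qed.

Lemma proj_perp_kill p (M : 'M[R]_(n, p)) : \rank M = p -> proj_perp M *m M = 0.
Proof.
move=> rk; rewrite /proj_perp mulmxBl mul1mx -!mulmxA.
by rewrite (mulVmx (gram_unit rk)) mulmx1 subrr.
Qed.

End Glue.
From HB Require Import structures.
From mathcomp Require Import all_boot all_order all_algebra.
From mathcomp Require Import ring lra zify.
Import Order.TTheory GRing.Theory Num.Theory.
Local Open Scope ring_scope.

Lemma nnz0 (R : rcfType) p (b : 'cV[R]_p) : (nnz b <= 0)%N -> b = 0.
Proof.
rewrite leqn0 cards_eq0 => /eqP h; apply/matrixP => i j; rewrite (ord1 j) mxE.
apply/eqP; apply: contraT => hi.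
suff : i \in (set0 : {set 'I_p}) by rewrite inE.
by rewrite -h inE.
Qed.

Lemma sqnorm0 (R : rcfType) p : sqnorm (0 : 'cV[R]_p) = 0.
Proof. by rewrite /sqnorm big1 // => i _; rewrite mxE expr0n. Qed.

Theorem mainTheorem2 (R : rcfType) (n m : nat) (A : 'M[R]_(n, m)) (x : 'cV[R]_m)
  (T : {set 'I_m}) (k : nat) :
  #|T| = k ->
  let y := A *m x in
  let u := #|supp x :\: T| in
  (exists delta : R, is_partial_RIC A k (2 * u)%N delta /\ delta < Num.sqrt 2 - 1) ->
  modCS_minimizer A y T x /\
  (forall b : 'cV[R]_m, modCS_minimizer A y T b -> b = x).
Proof.
move=> hk y u [d [[hrank [hbound hmin]] dlt]].
have [u0|upos] := posnP u.
  exfalso.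
  have hb : partial_RIC_bound A k (2 * u) (d - 1).
    move=> T' hT' b; rewrite u0 => /nnz0 ->.
    by rewrite !mulmx0 !sqnorm0 !mulr0.
  by have := hmin _ hb; lra.
set AT := colsubset A T; set AC := colsubset A (~: T).
set P := proj_perp AT; set Bm := P *m AC.
have rkT : \rank AT = #|T| by rewrite (hrank T hk) hk.
have RIP : forall b : 'cV[R]_#|~: T|, (nnz b <= 2 * u)%N ->
    (1 - d) * sqnorm b <= sqnorm (Bm *m b) /\ sqnorm (Bm *m b) <= (1 + d) * sqnorm b.
  by move=> b hb; rewrite /Bm -mulmxA; apply: hbound.
have [i0 i0S] : exists i0, i0 \in supp x :\: T by apply/card_gt0P.
have i0T : i0 \in ~: T by move: i0S; rewrite !inE => /andP [-> _].
have Npos : (0 < #|~: T|)%N by apply/card_gt0P; exists i0.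
have d0 : 0 <= d.
  pose j0 := Ordinal Npos.
  pose b : 'cV[R]_#|~: T| := delta_mx j0 0.
  have nb : nnz b = 1%N.
    rewrite /nnz; have -> : [set i | b i 0 != 0] = [set j0].
      apply/setP => i; rewrite !inE /b mxE eqxx andbT.
      by case: (i == j0); rewrite ?oner_eq0 ?eqxx.
    by rewrite cards1.
  have sb : sqnorm b = 1.
    rewrite /sqnorm (bigD1 j0) //= big1 ?addr0; first by rewrite /b mxE !eqxx expr1n.
    by move=> i /negbTE ne; rewrite /b mxE ne expr0n.
  have nb2 : (nnz b <= 2 * u)%N by rewrite nb; lia.
  have [h1 h2] := RIP b nb2.
  rewrite sb in h1 h2; lra.
have Bker : forall h : 'cV[R]_m, A *m h = 0 -> (Bm *m rT (~: T) h = 0) /\ (AT *m rT T h = - (AC *m rT (~: T) h)).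
  move=> h Ah; move: (Ah); rewrite (split_mul A T) => /eqP; rewrite addr_eq0 => /eqP e.
  split => //.
  have e' : AC *m rT (~: T) h = - (AT *m rT T h) by rewrite e opprK.
  by rewrite /Bm -mulmxA e' mulmxN mulmxA /P proj_perp_kill // mul0mx oppr0.
set xx := rT (~: T) x.
have cS : #|supp xx| = u.
  have eS : [set (@enum_val _ (mem (~: T)) j) | j in supp xx] = supp x :\: T.
    apply/setP => i; rewrite !inE; apply/imsetP/idP.
      case=> j; rewrite inE mxE => hj ->; rewrite hj andbT.
      by move: (enum_valP j); rewrite inE.
    case/andP => iT ix; exists (enum_rank_in i0T i).
      by rewrite inE mxE enum_rankK_in // inE.
    by rewrite enum_rankK_in // inE.
  by rewrite /u -eS card_imset //; apply: enum_val_inj.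
have l1E : forall b : 'cV[R]_m, l1norm_on (~: T) b = \sum_j `|rT (~: T) b j 0|.
  by move=> b; rewrite /l1norm_on big_enum_val; apply: eq_bigr => j _; rewrite mxE.
have key : forall b : 'cV[R]_m, A *m b = y -> l1norm_on (~: T) b <= l1norm_on (~: T) x ->
    rT (~: T) (b - x) = 0.
  move=> b Ab hl.
  have Ah : A *m (b - x) = 0 by rewrite mulmxBr Ab subrr.
  have [Bg _] := Bker _ Ah.
  apply: (core RIP d0 upos dlt Bg cS).
  by rewrite rTB addrC subrK -!l1E.
have rTeq : forall b : 'cV[R]_m, rT (~: T) (b - x) = 0 -> rT (~: T) b = rT (~: T) x.
  by move=> b; rewrite rTB => /eqP; rewrite subr_eq0 => /eqP.
split.
  split => // b' hb'.
  case: (lerP (l1norm_on (~: T) x) (l1norm_on (~: T) b')) => // lt.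
  have := rTeq _ (key b' hb' (ltW lt)) => e.
  by move: lt; rewrite !l1E e ltxx.
move=> b [Ab hm].
have g0 := key b Ab (hm x erefl).
have Ah : A *m (b - x) = 0 by rewrite mulmxBr Ab subrr.
have [_ e] := Bker _ Ah.
rewrite g0 mulmx0 oppr0 in e.
have hT0 := colrank_inj rkT e.
apply/eqP; rewrite -subr_eq0; apply/eqP/matrixP => i j; rewrite (ord1 j) [RHS]mxE.
case: (boolP (i \in T)) => iT.
  have := congr1 (fun M : 'cV[R]_#|T| => M (enum_rank_in iT i) 0) hT0.
  by rewrite /= !mxE enum_rankK_in.
have iT' : i \in ~: T by rewrite inE.
have := congr1 (fun M : 'cV[R]_#|~: T| => M (enum_rank_in iT' i) 0) g0.
by rewrite /= !mxE enum_rankK_in.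
Qed.
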